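(* If $G$ is a $\mathrm{sat}(n,K_{2,3})$-graph with minimum degree $\delta(G) = 1$, then $e(G) \geq 2n-3$.
   Context: All graphs are finite and simple. A graph $G$ is $K_{2,3}$-saturated if $G$ contains no subgraph isomorphic to $K_{2,3}$, but for every pair of nonadjacent vertices $u,v$, the graph $G+uv$ contains a subgraph isomorphic to $K_{2,3}$. $\mathrm{sat}(n,K_{2,3})$ is the minimum number of edges of a $K_{2,3}$-saturated graph on $n$ vertices, and a $\mathrm{sat}(n,K_{2,3})$-graph is a $K_{2,3}$-saturated graph on $n$ vertices with exactly $\mathrm{sat}(n,K_{2,3})$ edges. $e(G)$ is the number of edges and $\delta(G)$ the minimum degree of $G$. *)

(* Defs.v *)
From mathcomp Require Import all_boot.
Set Implicit Arguments. Unset Strict Implicit. Unset Printing Implicit Defensive.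

Record sgraph (n : nat) := SGraph {
  adj : rel 'I_n;
  adj_sym : symmetric adj;
  adj_irr : irreflexive adj }.

Definition nedges n (G : sgraph n) : nat :=
  #|[set p : 'I_n * 'I_n | (p.1 < p.2) && adj G p.1 p.2]|.

Definition deg n (G : sgraph n) (v : 'I_n) : nat := #|[set u | adj G v u]|.

Definition min_degree_is n (G : sgraph n) (d : nat) : Prop :=
  (exists v, deg G v = d) /\ (forall v, d <= deg G v).

Definition has_K23 n (r : rel 'I_n) : Prop :=
  exists a1 a2 b1 b2 b3 : 'I_n,
    uniq [:: a1; a2; b1; b2; b3] /\
    [/\ r a1 b1, r a1 b2, r a1 b3 & [/\ r a2 b1, r a2 b2 & r a2 b3]].

Definition add_edge n (r : rel 'I_n) (u v : 'I_n) : rel 'I_n :=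
  fun x y => [|| r x y, (x == u) && (y == v) | (x == v) && (y == u)].

Definition K23_saturated n (G : sgraph n) : Prop :=
  ~ has_K23 (adj G) /\
  forall u v : 'I_n, u != v -> ~~ adj G u v -> has_K23 (add_edge (adj G) u v).

(* G is a sat(n,K_{2,3})-graph: K_{2,3}-saturated with the minimum number of
   edges among all K_{2,3}-saturated graphs on n vertices,
   i.e. e(G) = sat(n,K_{2,3}) *)
Definition sat_K23_graph n (G : sgraph n) : Prop :=
  K23_saturated G /\ forall H : sgraph n, K23_saturated H -> nedges G <= nedges H.

(* Main.v *)
Require Import Defs.
From mathcomp Require Import all_boot.
From Stdlib Require Import Lia.
From Stdlib Require Import Lia.
Set Implicit Arguments. Unset Strict Implicit. Unset Printing Implicit Defensive.

Lemma sum_ge1 n (P : pred 'I_n) c : P c -> 1 <= \sum_y P y.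
Proof. by move=> Pc; rewrite (bigD1 c) //= Pc. Qed.

Lemma sum_ge2 n (P : pred 'I_n) c d : c != d -> P c -> P d -> 2 <= \sum_y P y.
Proof.
move=> cd Pc Pd; rewrite (bigD1 c) //= Pc (bigD1 d) /=; last by rewrite eq_sym cd.
by rewrite Pd.
Qed.

Lemma sum_eq1 n (c : 'I_n) : \sum_y (y == c : nat) = 1.
Proof. by rewrite (bigD1 c) //= eqxx big1 // => y /negbTE ->. Qed.

Lemma arith e n : 4 * n <= 2 * e + 6 -> 2 * n - 3 <= e.
Proof. move=> /leP H; apply/leP; rewrite -?multE -?plusE -?minusE in H *; lia. Qed.

Lemma L1 k s1 s2 : 2 <= s1 -> 4 + 0 * k <= s1 + s2 + 2 * 1 + 3 * 0 + 3 * 0.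
Proof. move=> /leP H; apply/leP; rewrite -?multE -?plusE in H *; lia. Qed.

Lemma L2 k s1 s2 : 2 <= s1 -> 2 <= s2 -> 4 + 0 * k <= s1 + s2 + 2 * 0 + 3 * 0 + 3 * 0.
Proof. move=> /leP H /leP H'; apply/leP; rewrite -?multE -?plusE in H H' *; lia. Qed.

Lemma nedgesE n (G : sgraph n) : 2 * nedges G = \sum_x \sum_y adj G x y.
Proof.
have -> : \sum_(x : 'I_n) \sum_(y : 'I_n) (adj G x y : nat) =
  \sum_(x : 'I_n) \sum_(y : 'I_n) ((x < y) && adj G x y : nat) + \sum_(x : 'I_n) \sum_(y : 'I_n) ((y < x) && adj G x y : nat).
  rewrite -big_split; apply: eq_bigr => x _; rewrite -big_split; apply: eq_bigr => y _ /=.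
  case: (ltngtP x y) => [h|h|/val_inj ->]; last by rewrite (adj_irr G).
    by case: (adj G x y).
  by case: (adj G x y).
rewrite [X in _ + X]exchange_big /=.
have -> : \sum_(j : 'I_n) \sum_(i : 'I_n) ((j < i) && adj G i j : nat) = \sum_(j : 'I_n) \sum_(i : 'I_n) ((j < i) && adj G j i : nat).
  by apply: eq_bigr => j _; apply: eq_bigr => i _; rewrite (adj_sym G).
rewrite addnn -mul2n; congr (2 * _).
rewrite /nedges -sum1_card big_mkcond /= pair_big /=.
by apply: eq_bigr => p _; rewrite inE; case: ifP.
Qed.

Lemma two_common n (G : sgraph n) (v w x : 'I_n) :
  (forall y, adj G v y -> y = w) -> ~ has_K23 (adj G) ->
  has_K23 (add_edge (adj G) v x) -> x != v -> x != w ->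
  exists c d, [/\ c != d, adj G x c, adj G x d, adj G w c & adj G w d].
Proof.
move=> Nv noK [a1 [a2 [b1 [b2 [b3 [U [h11 h12 h13 [h21 h22 h23]]]]]]]] xv xw.
set r := add_edge (adj G) v x in h11 h12 h13 h21 h22 h23.
have E1 p q : p != v -> q != v -> r p q = adj G p q.
  by move=> /negbTE pv /negbTE qv; rewrite /r /add_edge pv qv andbF /= orbF.
have Rs p q : r p q = r q p.
  rewrite /r /add_edge (adj_sym G q p).
  by case: (p == v); case: (q == x); case: (p == x); case: (q == v); rewrite /= ?orbT ?orbF.
have Ev q : r v q -> (q == w) || (q == x).
  rewrite /r /add_edge eqxx /= => /orP[/Nv ->|/orP[->|/andP[/eqP vx _]]].
  - by rewrite eqxx.
  - by rewrite orbT.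
  - by rewrite vx eqxx in xv.
have Ev' q : r q v -> (q == w) || (q == x) by rewrite Rs; apply: Ev.
(* v in the B part *)
have caseB : forall a1 a2 c d, a1 != a2 -> c != d -> c != v -> d != v ->
   a1 != v -> a2 != v -> (a1 == w) || (a1 == x) -> (a2 == w) || (a2 == x) ->
   r a1 c -> r a1 d -> r a2 c -> r a2 d ->
   exists c d, [/\ c != d, adj G x c, adj G x d, adj G w c & adj G w d].
  move=> e1 e2 c d ne cd cv dv e1v e2v He1 He2 H1 H2 H3 H4.
  have [[E1' E2']|[E1' E2']] : (e1 = w /\ e2 = x) \/ (e1 = x /\ e2 = w).
  - move: He1 He2 ne => /orP[]/eqP-> /orP[]/eqP->; rewrite ?eqxx //; auto.
  - move: H1 H2 H3 H4 e1v e2v; rewrite E1' E2' => H1 H2 H3 H4 e1v e2v.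
    by exists c, d; rewrite -!E1.
  - move: H1 H2 H3 H4 e1v e2v; rewrite E1' E2' => H1 H2 H3 H4 e1v e2v.
    by exists c, d; rewrite -!E1.
have U0 := U.
move: U; rewrite /= !inE !negb_or -!andbA => U.
case/and5P: U => u1 u2 u3 u4 /and5P[u5 u6 u7 u8 /and3P[u9 u10 _]].
case: (eqVneq a1 v) => [ea|na1].
  rewrite ea in h11 h12 h13.
  move: (Ev _ h11) (Ev _ h12) (Ev _ h13) u8 u9 u10.
  by move=> /orP[]/eqP-> /orP[]/eqP-> /orP[]/eqP->; rewrite ?eqxx.
case: (eqVneq a2 v) => [ea|na2].
  rewrite ea in h21 h22 h23.
  move: (Ev _ h21) (Ev _ h22) (Ev _ h23) u8 u9 u10.
  by move=> /orP[]/eqP-> /orP[]/eqP-> /orP[]/eqP->; rewrite ?eqxx.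
case: (eqVneq b1 v) => [eb|nb1].
  rewrite eb in h11 h21 u8 u9.
  by apply: (caseB a1 a2 b2 b3) => //; [rewrite eq_sym|rewrite eq_sym|apply: Ev'|apply: Ev'].
case: (eqVneq b2 v) => [eb|nb2].
  rewrite eb in h12 h22 u8 u10.
  by apply: (caseB a1 a2 b1 b3) => //; [rewrite eq_sym|apply: Ev'|apply: Ev'].
case: (eqVneq b3 v) => [eb|nb3].
  rewrite eb in h13 h23 u9 u10.
  by apply: (caseB a1 a2 b1 b2) => //; [apply: Ev'|apply: Ev'].
exfalso; apply: noK; exists a1, a2, b1, b2, b3; split=> //.
by rewrite -!E1.
Qed.

Theorem lemma4p1 (n : nat) (G : sgraph n) :
  sat_K23_graph G -> min_degree_is G 1 -> 2 * n - 3 <= nedges G.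
Proof.
move=> [[noK sat] _] [[v dv] _].
have [w Hw] : exists w, [set u | adj G v u] = [set w] by apply/cards1P; apply/eqP.
have Nv y : adj G v y -> y = w by move=> h; apply/set1P; rewrite -Hw inE.
have vw : adj G v w by have := set11 w; rewrite -Hw inE.
have wv : adj G w v by rewrite (adj_sym G).
have wnv : w != v by apply/eqP => e; move: vw; rewrite e (adj_irr G).
have Com x : x != v -> x != w ->
    exists c d, [/\ c != d, adj G x c, adj G x d, adj G w c & adj G w d].
  move=> xv xw; apply: (two_common (v:=v)) => //; apply: sat; first by rewrite eq_sym.
  by apply/negP => /Nv/eqP; rewrite (negbTE xw).
pose A y := adj G w y && (y != v).
pose a := \sum_y (A y : nat).
pose F x := \sum_y (A y && adj G x y : nat) + \sum_y (~~ A x && adj G x y : nat).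
have EF : \sum_(x : 'I_n) \sum_(y : 'I_n) (adj G x y : nat) = \sum_x F x.
  have -> : \sum_(x : 'I_n) \sum_(y : 'I_n) (adj G x y : nat) =
     \sum_(x : 'I_n) \sum_(y : 'I_n) (A y && adj G x y : nat) +
     \sum_(x : 'I_n) \sum_(y : 'I_n) (~~ A y && adj G x y : nat).
    rewrite -big_split; apply: eq_bigr => x _; rewrite -big_split.
    by apply: eq_bigr => y _ /=; case: (A y); case: (adj G x y).
  rewrite [X in _ + X = _]exchange_big -big_split; apply: eq_bigr => x _.
  by rewrite /F; congr (_ + _); apply: eq_bigr => y _; rewrite (adj_sym G).
have Hx x : 4 + (x == w) * (2 * a) <= F x + 2 * A x + 3 * (x == v) + 3 * (x == w).
  case: (eqVneq x v) => [->|xv].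
    have Av : A v = false by rewrite /A eqxx andbF.
    rewrite eq_sym (negbTE wnv) Av /= /F.
    have h1 : ~~ A v && adj G v w by rewrite Av vw.
    have := @sum_ge1 n (fun y => ~~ A v && adj G v y) w h1.
    rewrite Av /= => h; move/leP: h => h; apply/leP.
    rewrite -?plusE -?multE in h *; lia.
  case: (eqVneq x w) => [->|xw].
    have Aw : A w = false by rewrite /A (adj_irr G).
    rewrite Aw /F.
    have e1 : \sum_y (A y && adj G w y : nat) = a.
      rewrite /a; apply: eq_bigr => y _; rewrite /A. by rewrite andbAC andbb.
    have e2 : \sum_y ((A y : nat) + (y == v)) <= \sum_y (~~ A w && adj G w y : nat).
      apply: leq_sum => y _; rewrite Aw /A.
      case: (eqVneq y v) => [->|yv]; first by rewrite ?eqxx /= ?andbF wv.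
      by rewrite /= andbT addn0.
    rewrite big_split sum_eq1 /= in e2.
    rewrite -/a in e2; rewrite e1 /= ?mul1n ?muln1 ?muln0 ?mul0n ?addn0.
    move/leP: e2 => e2; apply/leP; rewrite -?plusE -?multE in e2 *; lia.
  have [c [d [cd xc xd wc wd]]] := Com x xv xw.
  have nv y : adj G x y -> y != v.
    by move=> h; apply/eqP => e; rewrite e (adj_sym G) in h; move: xw; rewrite (Nv _ h) eqxx.
  have s1 : 2 <= \sum_y (A y && adj G x y : nat).
    by apply: (@sum_ge2 n (fun y => A y && adj G x y) c d cd) => /=;
      rewrite /A ?wc ?wd ?xc ?xd ?nv.
  rewrite /F; case Ax: (A x).
    exact: (@L1 _ _ _ s1).
  have s2 : 2 <= \sum_y (~~ A x && adj G x y : nat).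
    by apply: (@sum_ge2 n (fun y => ~~ A x && adj G x y) c d cd); rewrite /= Ax.
  rewrite Ax in s2; exact: (@L2 _ _ _ s1 s2).
have : \sum_(x : 'I_n) (4 + (x == w) * (2 * a)) <=
   \sum_(x : 'I_n) (F x + 2 * A x + 3 * (x == v) + 3 * (x == w)).
  by apply: leq_sum => x _; exact: Hx.
have S1 : \sum_(x : 'I_n) (4 + (x == w) * (2 * a)) = 4 * n + 2 * a.
  rewrite big_split -big_distrl sum_eq1 sum_nat_const card_ord /= mul1n.
  by rewrite mulnC.
have S2 : \sum_(x : 'I_n) (F x + 2 * A x + 3 * (x == v) + 3 * (x == w)) =
   \sum_x F x + 2 * a + 3 + 3.
  transitivity (\sum_x F x + \sum_x 2 * (A x : nat) + \sum_(x : 'I_n) 3 * (x == v : nat)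
     + \sum_(x : 'I_n) 3 * (x == w : nat)).
    by rewrite -!big_split.
  by rewrite -!big_distrr /= !sum_eq1.
rewrite S1 S2 -EF -nedgesE => H.
apply: arith; move/leP: H => H; apply/leP; rewrite -?plusE -?multE in H *; lia.
Qed.
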